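(* Assume the setting and notation described in the context, and suppose the event $\mathcal{E}$ holds. Let $\gamma\in(0,1)$ and let $k'\ge k$ be an integer. Let $\mathbf{w}^{(0)}$ be the output $\hat{\mathbf{v}}$ of the SEP algorithm, and suppose its final support $S^{(k)}$ satisfies $\|\mathbf{v}_{S^{(k)}}\|_2\ge\sqrt{\gamma}$. Let $\mathbf{w}^{(T)}$ be the $T$-th iterate of the TPower refinement with keep-$k'$ thresholding started from $\mathbf{w}^{(0)}$. There exist absolute constants $C_1,C_2>0$ such that if $$ m\ \ge\ C_1\frac{(1+\theta)^2}{\theta^2\gamma^2}k'\log n, $$ then $$ \sin\angle\big(\mathbf{w}^{(T)},\mathbf{v}\big)\ \le\ C_2\frac{1+\theta}{\theta\gamma}\sqrt{\frac{k'\log n}{m}}\qquad\text{for all } T\ge 1. $$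
   Context: Let $n\ge 2$, $m\ge 1$, $\theta>0$, $k\in\{1,\dots,n\}$. Let $\mathbf{v}\in\mathbb{R}^n$ with $\|\mathbf{v}\|_2=1$ and at most $k$ nonzero entries. Let $\mathbf{x}_1,\dots,\mathbf{x}_m$ be i.i.d. $\mathcal{N}(\mathbf{0},\mathbf{I}_n+\theta\mathbf{v}\mathbf{v}^\top)$. Put $\hat{\boldsymbol{\Sigma}}=\frac1m\sum_i\mathbf{x}_i\mathbf{x}_i^\top$, $\hat{\boldsymbol{\Gamma}}=\hat{\boldsymbol{\Sigma}}-\mathbf{I}_n$, $\mathbf{W}=\hat{\boldsymbol{\Gamma}}-\theta\mathbf{v}\mathbf{v}^\top$. $\mathbf{A}_{S,U}$ denotes a submatrix, $\mathbf{v}_S$ the restriction of $\mathbf{v}$ to $S\subseteq[n]$; $\|\cdot\|_2$ is the Euclidean/spectral norm. For unit vectors, $\sin\angle(\mathbf{a},\mathbf{b})=\sqrt{1-\langle\mathbf{a},\mathbf{b}\rangle^2}$. Fix an absolute constant $C_0>0$; the event $\mathcal{E}$ is: for all $p\in[n]$ and all $S\subseteq[n]$ with $|S|=p$, $\|\mathbf{W}_{S,S}\|_2\le C_0(1+\theta)\sqrt{p\log n/m}$. ''Absolute constant'' means independent of $n,m,k,k',\theta,\mathbf{v},\gamma,T$. SEP algorithm: $S^{(1)}=\{j^\ast\}$ with $j^\ast$ maximizing $|\hat{\boldsymbol{\Gamma}}_{jj}|$; for $p=1,\dots,k-1$, $\hat{\mathbf{e}}^{(p)}$ is a unit top eigenvector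 (largest eigenvalue) of $\hat{\boldsymbol{\Gamma}}_{S^{(p)},S^{(p)}}$ zero-padded to $\mathbb{R}^n$, and $S^{(p+1)}$ is the index set of the $p+1$ largest entries of $|\hat{\boldsymbol{\Gamma}}\hat{\mathbf{e}}^{(p)}|$; output $\hat{\mathbf{v}}$ is a unit top eigenvector of $\hat{\boldsymbol{\Gamma}}_{S^{(k)},S^{(k)}}$ zero-padded to $\mathbb{R}^n$. TPower refinement with keep-$k'$ thresholding: $\mathbf{w}^{(t+1)}=\mathcal{H}_{k'}(\hat{\boldsymbol{\Gamma}}\mathbf{w}^{(t)})/\|\mathcal{H}_{k'}(\hat{\boldsymbol{\Gamma}}\mathbf{w}^{(t)})\|_2$, where $\mathcal{H}_{k'}$ keeps the $k'$ largest-magnitude entries of a vector and sets the others to zero. *)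

(* Defs.v *)
From HB Require Import structures.
From mathcomp Require Import all_boot all_order all_algebra.
From mathcomp Require Import all_classical all_reals all_analysis.
Set Implicit Arguments. Unset Strict Implicit. Unset Printing Implicit Defensive.
Import Order.TTheory GRing.Theory Num.Theory.
Local Open Scope classical_set_scope.
Local Open Scope ring_scope.

Section Defs.
Variable R : realType.

Definition norm2 (p : nat) (x : 'cV[R]_p) : R := Num.sqrt (\sum_i (x i 0) ^+ 2).
Definition dotv (p : nat) (x y : 'cV[R]_p) : R := \sum_i x i 0 * y i 0.

(* sin of the angle between (unit) vectors *)
Definition sin_angle (p : nat) (a b : 'cV[R]_p) : R := Num.sqrt (1 - (dotv a b) ^+ 2).

Definition spec_norm (p q : nat) (A : 'M[R]_(p, q)) : R :=
  sup [set norm2 (A *m x) | x in [set x : 'cV[R]_q | norm2 x = 1]].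

(* principal submatrix A_{S,S} (rows/cols of S in increasing order) *)
Definition subSS (n : nat) (A : 'M[R]_n) (S : {set 'I_n}) : 'M[R]_#|S| :=
  mxsub (@enum_val _ (mem S)) (@enum_val _ (mem S)) A.

Definition restr_norm (n : nat) (v : 'cV[R]_n) (S : {set 'I_n}) : R :=
  Num.sqrt (\sum_(i in S) (v i 0) ^+ 2).

Definition supp (n : nat) (v : 'cV[R]_n) : {set 'I_n} := [set i | v i 0 != 0].

Definition top_eigvec (n : nat) (A : 'M[R]_n) (S : {set 'I_n}) (u : 'cV[R]_n) : Prop :=
  exists (y : 'cV[R]_#|S|) (lam : R),
    [/\ norm2 y = 1,
        subSS A S *m y = lam *: y,
        (forall (mu : R) (z : 'cV[R]_#|S|), z != 0 -> subSS A S *m z = mu *: z -> mu <= lam),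
        (forall j : 'I_#|S|, u (enum_val j) 0 = y j 0) &
        (forall i, i \notin S -> u i 0 = 0)].

Definition top_entries (n : nat) (g : 'cV[R]_n) (r : nat) (S : {set 'I_n}) : Prop :=
  #|S| = r /\ (forall i j, i \in S -> j \notin S -> `|g j 0| <= `|g i 0|).

Definition hard_thresh (n : nat) (k' : nat) (g h : 'cV[R]_n) : Prop :=
  exists S : {set 'I_n}, top_entries g (minn k' n) S /\
    (forall i, h i 0 = if i \in S then g i 0 else 0).

(* A possible run of SEP on Gamma with sparsity k: supports S^(1..k),
   intermediate vectors e^(1..k-1), and output w0 *)
Definition SEP_run (n : nat) (Gam : 'M[R]_n) (k : nat)
    (S : nat -> {set 'I_n}) (e : nat -> 'cV[R]_n) (w0 : 'cV[R]_n) : Prop :=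
  [/\ (exists jstar : 'I_n, S 1%N = [set jstar]%SET /\
         forall j : 'I_n, `|Gam j j| <= `|Gam jstar jstar|),
      (forall p : nat, (1 <= p <= k.-1)%N ->
         top_eigvec Gam (S p) (e p) /\ top_entries (Gam *m e p) p.+1 (S p.+1)) &
      top_eigvec Gam (S k) w0].

Definition tpower_run (n : nat) (Gam : 'M[R]_n) (k' : nat)
    (w0 : 'cV[R]_n) (w : nat -> 'cV[R]_n) : Prop :=
  w 0%N = w0 /\
  forall t : nat, exists h : 'cV[R]_n,
    hard_thresh k' (Gam *m w t) h /\ w t.+1 = (norm2 h)^-1 *: h.

(* sample covariance, Gamma-hat, W, from the samples x_1..x_m (columns of X) *)
Definition Sigma_hat (n m : nat) (X : 'M[R]_(n, m)) : 'M[R]_n :=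
  (m%:R)^-1 *: (X *m X^T).
Definition Gamma_hat (n m : nat) (X : 'M[R]_(n, m)) : 'M[R]_n := Sigma_hat X - 1%:M.
Definition W_mat (n m : nat) (X : 'M[R]_(n, m)) (theta : R) (v : 'cV[R]_n) : 'M[R]_n :=
  Gamma_hat X - theta *: (v *m v^T).

Definition event_E (n m : nat) (X : 'M[R]_(n, m)) (theta : R) (v : 'cV[R]_n) (C0 : R) : Prop :=
  forall S : {set 'I_n}, (0 < #|S|)%N ->
    spec_norm (subSS (W_mat X theta v) S)
      <= C0 * (1 + theta) * Num.sqrt (#|S|%:R * ln (n%:R) / m%:R).

End Defs.

(* Main.v *)
Require Import Defs.
From HB Require Import structures.
From mathcomp Require Import all_boot all_order all_algebra.
From mathcomp Require Import all_classical all_reals all_analysis.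
Import Order.TTheory GRing.Theory Num.Theory.
Local Open Scope ring_scope.
From mathcomp Require Import ring lra zify.

Notation subSSm := Defs.subSS.

Section Basic.
Set Implicit Arguments. Unset Strict Implicit. Unset Printing Implicit Defensive.
Variable R : realType.
Implicit Types (p : nat).

Definition nsq p (x : 'cV[R]_p) : R := \sum_i (x i 0) ^+ 2.

Lemma nsq_ge0 p (x : 'cV[R]_p) : 0 <= nsq x.
Proof. by apply: sumr_ge0 => i _; exact: sqr_ge0. Qed.

Lemma norm2E p (x : 'cV[R]_p) : norm2 x = Num.sqrt (nsq x).
Proof. by []. Qed.

Lemma norm2_sq p (x : 'cV[R]_p) : norm2 x ^+ 2 = nsq x.
Proof. by rewrite norm2E sqr_sqrtr // nsq_ge0. Qed.

Lemma nsq_eq0 p (x : 'cV[R]_p) : nsq x = 0 -> x = 0.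
Proof.
move=> h; apply/matrixP => i j; rewrite (ord1 j) mxE.
have := psumr_eq0P (fun i _ => sqr_ge0 (x i 0)) h (i:=i) isT.
by move/eqP; rewrite sqrf_eq0 => /eqP.
Qed.

Lemma dotvxx p (x : 'cV[R]_p) : dotv x x = nsq x.
Proof. by apply: eq_bigr => i _; rewrite expr2. Qed.

Lemma dotvC p (x y : 'cV[R]_p) : dotv x y = dotv y x.
Proof. by apply: eq_bigr => i _; rewrite mulrC. Qed.

Lemma dotvDl p (x y z : 'cV[R]_p) : dotv (x + y) z = dotv x z + dotv y z.
Proof. by rewrite /dotv -big_split; apply: eq_bigr => i _; rewrite mxE mulrDl. Qed.

Lemma dotvDr p (x y z : 'cV[R]_p) : dotv z (x + y) = dotv z x + dotv z y.
Proof. by rewrite dotvC dotvDl !(dotvC z). Qed.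

Lemma dotvZl p (a : R) (x y : 'cV[R]_p) : dotv (a *: x) y = a * dotv x y.
Proof. by rewrite /dotv mulr_sumr; apply: eq_bigr => i _; rewrite mxE mulrA. Qed.

Lemma dotvZr p (a : R) (x y : 'cV[R]_p) : dotv y (a *: x) = a * dotv y x.
Proof. by rewrite dotvC dotvZl dotvC. Qed.

Lemma dotvNl p (x y : 'cV[R]_p) : dotv (- x) y = - dotv x y.
Proof. by rewrite -scaleN1r dotvZl mulN1r. Qed.

Lemma dotvNr p (x y : 'cV[R]_p) : dotv y (- x) = - dotv y x.
Proof. by rewrite dotvC dotvNl dotvC. Qed.

Lemma dotv_mulmx p (A : 'M[R]_p) (x y : 'cV[R]_p) :
  dotv x (A *m y) = dotv (A^T *m x) y.
Proof.
rewrite /dotv.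
under eq_bigr do rewrite mxE big_distrr /=.
under [RHS]eq_bigr do rewrite mxE big_distrl /=.
rewrite exchange_big /=; apply: eq_bigr => i _; apply: eq_bigr => j _.
by rewrite mxE mulrCA mulrA.
Qed.

Lemma nsqZ p (a : R) (x : 'cV[R]_p) : nsq (a *: x) = a ^+ 2 * nsq x.
Proof. by rewrite -!dotvxx dotvZl dotvZr mulrA -expr2. Qed.

Lemma nsqD p (x y : 'cV[R]_p) : nsq (x + y) = nsq x + 2 * dotv x y + nsq y.
Proof.
rewrite -!dotvxx dotvDl !dotvDr (dotvC y x); by rewrite mulr2n mulrDl mul1r !addrA.
Qed.

Lemma cauchy_schwarz p (x y : 'cV[R]_p) : dotv x y ^+ 2 <= nsq x * nsq y.
Proof.
have [hx|hx] := eqVneq (nsq x) 0.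
  rewrite hx mul0r (nsq_eq0 hx) /dotv big1; first by rewrite expr2 mul0r.
  by move=> i _; rewrite mxE mul0r.
have px : 0 < nsq x by rewrite lt_def hx nsq_ge0.
pose t := dotv x y / nsq x.
have h := nsq_ge0 (y - t *: x).
have e1 : nsq (y - t *: x) = nsq y - 2 * t * dotv x y + t ^+ 2 * nsq x.
  by rewrite nsqD -scaleNr nsqZ dotvZr sqrrN (dotvC y x); ring.
have e2 : nsq (y - t *: x) = nsq y - dotv x y ^+ 2 / nsq x.
  rewrite e1 /t; field; by rewrite hx.
rewrite -subr_ge0.
have -> : nsq x * nsq y - dotv x y ^+ 2 = nsq x * nsq (y - t *: x).
  rewrite e2; field; by rewrite hx.
by apply: mulr_ge0; [exact: ltW | exact: nsq_ge0].
Qed.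

End Basic.

Section Spec.
Set Implicit Arguments. Unset Strict Implicit. Unset Printing Implicit Defensive.
Import numFieldTopology.Exports numFieldNormedType.Exports.
Local Open Scope classical_set_scope.
Variable R : realType.

Lemma nsq_tr p (r : 'rV[R]_p) : nsq r^T = \sum_i (r ord0 i) ^+ 2.
Proof. by apply: eq_bigr => i _; rewrite mxE. Qed.

Lemma sphere_compact p :
  compact [set r : 'rV[R]_p | nsq r^T = 1].
Proof.
apply: (@subclosed_compact _ _ [set v : 'rV[R]_p | forall i, `[(-1:R), 1]%classic (v ord0 i)]).
- have -> : [set r : 'rV[R]_p | nsq r^T = 1] = (fun r : 'rV[R]_p => \sum_i (r ord0 i) ^+ 2) @^-1` [set 1].
    by apply/seteqP; split => r /=; rewrite nsq_tr.
  apply: preimage_closed; last exact: closed_eq.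
  move=> r _; apply: continuous_big.
  + exact: add_continuous.
  + move=> i _.
    have -> : (fun r : 'rV[R]_p => r ord0 i ^+ 2) = (fun r => r ord0 i) \* (fun r => r ord0 i).
      by apply: funext => s; rewrite /= expr2.
    by move=> x; apply: continuousM; exact: coord_continuous.
- exact: (@rV_compact R p (fun=> `[(-1:R), 1]%classic) (fun=> @segment_compact R (-1) 1)).
- move=> r /= hr i; rewrite /= in_itv /=.
  have : (r ord0 i) ^+ 2 <= 1.
    rewrite -hr /nsq (bigD1 i) //= mxE lerDl.
    by apply: sumr_ge0 => j _; exact: sqr_ge0.
  by move=> h; apply/andP; split; nra.
Qed.


Lemma aux_contra (b t a d : R) : 0 < b -> 0 < t -> t * a < b -> - (t * a) <= t * d ->
  2 * t * b + t ^+ 2 * d <= 0 -> False.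
Proof. move=> hb ht h1 h2 h3; nra. Qed.

Lemma top_eig p (A : 'M[R]_p.+1) : A^T = A ->
  exists (z : 'cV[R]_p.+1) (mu : R),
    [/\ z != 0, A *m z = mu *: z & forall x, dotv x (A *m x) <= mu * nsq x].
Proof.
move=> As.
pose f := fun r : 'rV[R]_p.+1 => \sum_i r ord0 i * \sum_j A i j * r ord0 j.
have fE r : f r = dotv r^T (A *m r^T).
  rewrite /f /dotv; apply: eq_bigr => i _; rewrite !mxE; congr (_ * _).
  by apply: eq_bigr => j _; rewrite mxE.
have fc : continuous f.
  apply: continuous_big; first exact: add_continuous.
  move=> i _ x; apply: continuousM; first exact: coord_continuous.
  apply: continuous_big; first exact: add_continuous.
  move=> j _ y; apply: continuousM; first exact: cst_continuous.
  exact: coord_continuous.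
pose K := [set r : 'rV[R]_p.+1 | nsq r^T = 1].
have K0 : K !=set0.
  exists (delta_mx 0 0); rewrite /K /= nsq_tr (bigD1 ord0) //= big1 ?addr0.
    by rewrite mxE /= expr1n.
  by move=> i /negbTE hi; rewrite mxE hi /= expr0n.
have [c cK cmax] := compact_EVT_max K0 (@sphere_compact p.+1) (continuous_subspaceT fc).
pose z := c^T; pose mu := f c.
have hz : nsq z = 1 by move: cK; rewrite inE.
have hom x : dotv x (A *m x) <= mu * nsq x.
  have [hx|hx] := eqVneq (nsq x) 0.
    rewrite hx mulr0 (nsq_eq0 hx) /dotv big1 // => i _; by rewrite mxE mul0r.
  have px : 0 < nsq x by rewrite lt_def hx nsq_ge0.
  pose s := Num.sqrt (nsq x).
  have ps : 0 < s by rewrite sqrtr_gt0.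
  have s2 : s ^+ 2 = nsq x by rewrite sqr_sqrtr // ltW.
  have rK : K (s^-1 *: x)^T.
    by rewrite /K /= trmxK nsqZ exprVn s2 mulVf.
  have := cmax _ (mem_set rK).
  rewrite fE trmxK -/mu -scalemxAr dotvZl dotvZr mulrA -expr2 exprVn s2.
  by rewrite ler_pdivrMl // mulrC.
have hAz : dotv z (A *m z) = mu by rewrite /mu fE.
have e1 y : dotv z (A *m y) = dotv y (A *m z) by rewrite dotv_mulmx As dotvC.
pose y := A *m z - mu *: z.
have e2 : dotv y (A *m z) = nsq y + mu * dotv y z.
  by rewrite -dotvxx {2}/y dotvDr dotvNr dotvZr; ring.
have hy : y = A *m z - mu *: z by [].
clearbody y.
have key t : 2 * t * nsq y + t ^+ 2 * (dotv y (A *m y) - mu * nsq y) <= 0.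
  have h := hom (z + t *: y).
  rewrite mulmxDr -scalemxAr !dotvDl !dotvDr !dotvZl !dotvZr hAz nsqD nsqZ hz dotvZr in h.
  rewrite e1 e2 (dotvC z y) in h.
  rewrite -subr_ge0; rewrite -subr_ge0 in h.
  by apply: le_trans h _; rewrite le_eqVlt; apply/orP; left; apply/eqP; ring.
have y0 : nsq y = 0.
  apply/eqP; rewrite eq_le nsq_ge0 andbT leNgt; apply/negP => yp.
  set b := nsq y in yp key; set cc := dotv y (A *m y) - mu * b in key.
  pose t := b / (`|cc| + 1).
  have pc : 0 < `|cc| + 1 by rewrite ltr_pwDr // normr_ge0.
  have pt : 0 < t by rewrite divr_gt0.
  have tc : t * `|cc| < b.
    by rewrite /t mulrAC ltr_pdivrMr // ltr_pM2l // ltrDl ltr01.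
  have := key t.
  have : - `|cc| <= cc by apply: lerNnormlW.
  move=> h1 h2.
  have h3 : - (t * `|cc|) <= t * cc by rewrite -mulrN ler_pM2l.
  exact: (aux_contra yp pt tc h3 h2).
exists z, mu; split => //.
  apply/eqP => z0; move: hz; rewrite z0 /nsq big1.
    by move/esym/eqP; rewrite oner_eq0.
  by move=> i _; rewrite mxE expr0n.
by apply/eqP; rewrite -subr_eq0 -hy; apply/eqP; exact: nsq_eq0.
Qed.

End Spec.

Section Main.
Set Implicit Arguments. Unset Strict Implicit. Unset Printing Implicit Defensive.
Variable R : realType.

Lemma nsq_mul_bound p q (B : 'M[R]_(p, q)) (u : 'cV[R]_q) :
  nsq (B *m u) <= (\sum_i \sum_j B i j ^+ 2) * nsq u.
Proof.
rewrite /nsq mulr_suml; apply: ler_sum => i _.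
have -> : (B *m u) i 0 = dotv (row i B)^T u.
  by rewrite mxE; apply: eq_bigr => j _; rewrite !mxE.
apply: le_trans (cauchy_schwarz _ _) _.
apply: ler_wpM2r; first exact: nsq_ge0.
by rewrite le_eqVlt; apply/orP; left; apply/eqP; apply: eq_bigr => j _; rewrite !mxE.
Qed.


Lemma nsq_norm1 p (u : 'cV[R]_p) : norm2 u = 1 -> nsq u = 1.
Proof. by move=> h; rewrite -norm2_sq h expr1n. Qed.

Lemma norm2_ge0 p (u : 'cV[R]_p) : 0 <= norm2 u.
Proof. exact: sqrtr_ge0. Qed.

Lemma spec_norm_unit p q (B : 'M[R]_(p, q)) (u : 'cV[R]_q) :
  norm2 u = 1 -> norm2 (B *m u) <= spec_norm B.
Proof.
move=> hu; apply: sup_upper_bound; last by exists u.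
split; first by exists (norm2 (B *m u)); exists u.
exists (Num.sqrt (\sum_i \sum_j B i j ^+ 2)) => _ [x /= hx <-].
rewrite norm2E ler_sqrt; last by apply: sumr_ge0 => i _; apply: sumr_ge0 => j _; exact: sqr_ge0.
by apply: le_trans (nsq_mul_bound _ _) _; rewrite nsq_norm1 // mulr1.
Qed.

Lemma norm2Z p (a : R) (u : 'cV[R]_p) : norm2 (a *: u) = `|a| * norm2 u.
Proof. by rewrite !norm2E nsqZ sqrtrM ?sqr_ge0 // sqrtr_sqr. Qed.

Lemma spec_norm_bound p q (B : 'M[R]_(p, q)) (u : 'cV[R]_q) :
  norm2 (B *m u) <= spec_norm B * norm2 u.
Proof.
have [h0|h0] := eqVneq (nsq u) 0.
  rewrite (nsq_eq0 h0) mulmx0 !norm2E.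
  have -> : nsq (0 : 'cV[R]_p) = 0 by rewrite /nsq big1 // => i _; rewrite mxE expr0n.
  have -> : nsq (0 : 'cV[R]_q) = 0 by rewrite /nsq big1 // => i _; rewrite mxE expr0n.
  by rewrite sqrtr0 mulr0.
have pn : 0 < norm2 u by rewrite norm2E sqrtr_gt0 lt_def h0 nsq_ge0.
have hu1 : norm2 ((norm2 u)^-1 *: u) = 1.
  rewrite norm2Z ger0_norm; last by rewrite invr_ge0 ltW.
  by rewrite mulVf // gt_eqF.
have := spec_norm_unit B hu1.
rewrite -scalemxAr norm2Z ger0_norm; last by rewrite invr_ge0 ltW.
by rewrite ler_pdivrMl // mulrC.
Qed.


Definition compv n (S : {set 'I_n}) (u : 'cV[R]_n) : 'cV[R]_#|S| :=
  \col_j u (enum_val j) 0.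

Lemma sum_comp n (S : {set 'I_n}) (F : 'I_n -> R) :
  \sum_(j < #|S|) F (enum_val j) = \sum_(i in S) F i.
Proof. by rewrite [RHS]big_enum_val. Qed.

Lemma sum_out n (S : {set 'I_n}) (F : 'I_n -> R) :
  (forall i, i \notin S -> F i = 0) -> \sum_i F i = \sum_(i in S) F i.
Proof.
move=> h; rewrite [RHS]big_mkcond /=; apply: eq_bigr => i _.
by case: ifP => // /negbT /h.
Qed.

Lemma subSS_comp n (A : 'M[R]_n) (S : {set 'I_n}) (u : 'cV[R]_n) :
  (forall i, i \notin S -> u i 0 = 0) ->
  forall j, (subSSm A S *m compv S u) j 0 = (A *m u) (enum_val j) 0.
Proof.
move=> hu j; rewrite !mxE (sum_out (S := S)); last by move=> i /hu ->; rewrite mulr0.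
rewrite -sum_comp; apply: eq_bigr => l _; by rewrite !mxE.
Qed.

Lemma nsq_comp n (S : {set 'I_n}) (u : 'cV[R]_n) :
  nsq (compv S u) = \sum_(i in S) u i 0 ^+ 2.
Proof. by rewrite /nsq -sum_comp; apply: eq_bigr => j _; rewrite mxE. Qed.

Lemma nsq_comp_out n (S : {set 'I_n}) (u : 'cV[R]_n) :
  (forall i, i \notin S -> u i 0 = 0) -> nsq (compv S u) = nsq u.
Proof.
move=> hu; rewrite nsq_comp /nsq (sum_out (S := S)) // => i /hu ->.
by rewrite expr0n.
Qed.

Lemma dotv_comp_out n (S : {set 'I_n}) (u x : 'cV[R]_n) :
  (forall i, i \notin S -> u i 0 = 0) -> dotv (compv S x) (compv S u) = dotv x u.
Proof.
move=> hu; rewrite /dotv (sum_out (S := S) (F := fun i => x i 0 * u i 0)).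
  by rewrite -sum_comp; apply: eq_bigr => j _; rewrite !mxE.
by move=> i /hu ->; rewrite mulr0.
Qed.


Lemma top_eig' p (A : 'M[R]_p) : (0 < p)%N -> A^T = A ->
  exists (z : 'cV[R]_p) (mu : R),
    [/\ z != 0, A *m z = mu *: z & forall x, dotv x (A *m x) <= mu * nsq x].
Proof. by case: p A => [//|p] A _; exact: top_eig. Qed.

Lemma sq_bound (d c : R) : 0 <= c -> d ^+ 2 <= c ^+ 2 -> - c <= d /\ d <= c.
Proof. by move=> hc h; split; nra. Qed.

Lemma quad_bound p (B : 'M[R]_p) (D : R) (u : 'cV[R]_p) : 0 <= D ->
  nsq (B *m u) <= D ^+ 2 * nsq u ->
  - (D * nsq u) <= dotv u (B *m u) /\ dotv u (B *m u) <= D * nsq u.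
Proof.
move=> hD h; apply: sq_bound; first by apply: mulr_ge0 => //; exact: nsq_ge0.
apply: le_trans (cauchy_schwarz _ _) _.
have := nsq_ge0 u; move: h; set a := nsq (B *m u); set b := nsq u => h hb.
nra.
Qed.

Lemma sep_lemma n (Gam W : 'M[R]_n) (v : 'cV[R]_n) (theta D gamma : R)
    (S0 : {set 'I_n}) (w0 : 'cV[R]_n) :
  0 < theta -> 0 <= D -> 0 < gamma -> 4 * D <= theta * gamma ->
  (forall y, subSSm Gam S0 *m y = subSSm W S0 *m y + (theta * dotv (compv S0 v) y) *: compv S0 v) ->
  Gam^T = Gam ->
  (forall y, nsq (subSSm W S0 *m y) <= D ^+ 2 * nsq y) ->
  (0 < #|S0|)%N ->
  gamma <= nsq (compv S0 v) ->
  top_eigvec Gam S0 w0 ->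
  [/\ nsq w0 = 1, (forall i, i \notin S0 -> w0 i 0 = 0) & gamma / 2 <= dotv v w0 ^+ 2].
Proof.
move=> th0 D0 g0 hDg HG Hsym HE S0p hq [y [lam [hy hAy hmax hyw hout]]].
have cw : compv S0 w0 = y by apply/matrixP => i j; rewrite (ord1 j) mxE hyw.
have ny : nsq y = 1 by exact: nsq_norm1.
have nw : nsq w0 = 1 by rewrite -(nsq_comp_out hout) cw.
have dw : dotv v w0 = dotv (compv S0 v) y by rewrite -cw dotv_comp_out.
split => //; rewrite dw.
set x := compv S0 v in HG hq *.
set A := subSSm Gam S0 in HG hAy hmax *.
set B := subSSm W S0 in HG HE *.
have As : A^T = A.
  by apply/matrixP => i j; rewrite /A !mxE -[in LHS]Hsym mxE.
have [z [mu [z0 hz hmu]]] := top_eig' S0p As.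
have lm : mu <= lam by exact: hmax hz.
have hx := hmu x.
rewrite HG dotvDr dotvZr dotvxx in hx.
have [hx1 _] := quad_bound D0 (HE x).
have hl : lam = dotv y (B *m y) + theta * dotv x y * dotv y x.
  have e : dotv y (A *m y) = lam by rewrite hAy dotvZr dotvxx ny mulr1.
  by rewrite -e HG dotvDr dotvZr.
have [_ hy2] := quad_bound D0 (HE y).
rewrite ny mulr1 in hy2.
rewrite (dotvC y x) in hl.
set q := nsq x in hq hx hx1.
set s := dotv x y in hl *.
set d1 := dotv x (B *m x) in hx hx1.
set d2 := dotv y (B *m y) in hl hy2.
have qp : 0 < q by apply: lt_le_trans hq.
have hmu2 : theta * q - D <= mu.
  rewrite -(ler_pM2r qp); nra.
have : theta * (gamma / 2) <= theta * s ^+ 2 by nra.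
by rewrite ler_pM2l.
Qed.

End Main.

Section Step.
Set Implicit Arguments. Unset Strict Implicit. Unset Printing Implicit Defensive.
Variable R : realType.

Lemma sq_le_abs (x y : R) : `|x| <= `|y| -> x ^+ 2 <= y ^+ 2.
Proof.
move=> h; have := normr_ge0 x.
rewrite -(real_normK (num_real x)) -(real_normK (num_real y)); nra.
Qed.

Lemma sum_set_ge0 n (A : {set 'I_n}) (f : 'I_n -> R) :
  (forall i, 0 <= f i) -> 0 <= \sum_(i in A) f i.
Proof. by move=> h; apply: sumr_ge0 => i _; exact: h. Qed.

Lemma count_lemma n (P Q : {set 'I_n}) (f E : 'I_n -> R) :
  (#|P| <= #|Q|)%N -> (forall i, 0 <= E i) ->
  (forall i j, i \in P -> j \in Q -> f i <= E j) ->
  \sum_(i in P) f i <= \sum_(j in Q) E j.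
Proof.
move=> hPQ E0 h.
have [Q0|Qp] := eqVneq #|Q| 0%N.
  have : #|P| = 0%N by lia.
  move/cards0_eq => ->; rewrite big_set0; exact: sum_set_ge0.
have qp : (0 : R) < #|Q|%:R by rewrite ltr0n lt0n.
rewrite -(ler_pM2l qp).
have e1 : #|Q|%:R * \sum_(i in P) f i = \sum_(j in Q) \sum_(i in P) f i.
  by rewrite sumr_const mulr_natl.
have e2 : \sum_(j in Q) \sum_(i in P) E j = #|P|%:R * \sum_(j in Q) E j.
  rewrite mulr_sumr; apply: eq_bigr => j _; by rewrite sumr_const mulr_natl.
rewrite e1; apply: le_trans (_ : _ <= \sum_(j in Q) \sum_(i in P) E j) _.
  by apply: ler_sum => j hj; apply: ler_sum => i hi; exact: h.
rewrite e2; apply: ler_wpM2r; first exact: sum_set_ge0.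
by rewrite ler_nat.
Qed.


Lemma step_lemma n (Gam W : 'M[R]_n) (v w h : 'cV[R]_n) (theta D g : R)
    (k k' : nat) (Sw J : {set 'I_n}) :
  0 < theta -> 0 <= D -> 0 < g ->
  (forall u, Gam *m u = W *m u + (theta * dotv v u) *: v) ->
  (forall (F : {set 'I_n}) (u : 'cV[R]_n), (0 < #|F|)%N -> (#|F| <= 3 * k')%N ->
      (forall i, i \notin F -> u i 0 = 0) ->
      \sum_(i in F) (W *m u) i 0 ^+ 2 <= D ^+ 2 * nsq u) ->
  nsq v = 1 -> (#|supp v| <= k)%N -> (k <= k')%N ->
  nsq w = 1 -> (#|Sw| <= k')%N -> (forall i, i \notin Sw -> w i 0 = 0) ->
  g <= dotv v w ^+ 2 ->
  12 * D ^+ 2 <= theta ^+ 2 * g ->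
  top_entries (Gam *m w) (minn k' n) J ->
  (forall i, h i 0 = if i \in J then (Gam *m w) i 0 else 0) ->
  [/\ 0 < nsq h, (forall i, i \notin J -> h i 0 = 0), (#|J| <= k')%N &
      1 - dotv v h ^+ 2 / nsq h <= 12 * D ^+ 2 / (theta ^+ 2 * g)].
Proof.
move=> th0 D0 g0 HGf HE hv1 hsv hkk nw hSw hwout hg hD [cardJ topJ] hh.
set a := theta * dotv v w.
set e := W *m w.
have gvE i : (Gam *m w) i 0 = e i 0 + a * v i 0 by rewrite HGf !mxE.
have suppE i : (i \in supp v) = (v i 0 != 0) by rewrite /supp inE.
pose F := J :|: supp v :|: Sw.
have cF : (#|F| <= 3 * k')%N.
  have h1 := (leq_card_setU (J :|: supp v) Sw).1.
  have h2 := (leq_card_setU J (supp v)).1.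
  rewrite /F; lia.
have [i0 hi0] : exists i0, v i0 0 != 0.
  have : \sum_i v i 0 ^+ 2 != 0 by move: hv1; rewrite /nsq => ->; exact: oner_neq0.
  move/eqP/psumr_neq0P => /(_ (fun i _ => sqr_ge0 _)) [i /andP [_ hi]].
  by exists i; move: hi; rewrite lt_def sqrf_eq0 => /andP [].
have Fp : (0 < #|F|)%N.
  by apply/card_gt0P; exists i0; rewrite /F !inE hi0 /= orbT.
have hwF i : i \notin F -> w i 0 = 0.
  by move=> hi; apply: hwout; move: hi; rewrite /F !inE negb_or => /andP [].
have HF := HE F w Fp cF hwF; rewrite nw mulr1 -/e in HF.
pose E := fun i => e i 0 ^+ 2.
have E0 i : 0 <= E i by exact: sqr_ge0.
pose P := supp v :\: J; pose Q := J :\: supp v.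
have hPQ : (#|P| <= #|Q|)%N.
  have c1 := cardsID (supp v) J.
  have c2 := cardsID J (supp v).
  have c3 : (#|supp v| <= minn k' n)%N.
    rewrite leq_min; apply/andP; split; first by lia.
    by have := max_card (mem (supp v)); rewrite card_ord.
  rewrite finset.setIC in c2; rewrite /P /Q; lia.
have cnt : \sum_(i in P) (Gam *m w) i 0 ^+ 2 <= \sum_(j in Q) E j.
  apply: count_lemma => // i j; rewrite !inE => /andP [hiJ _] /andP [hjv hjJ].
  have vj : v j 0 = 0 by move: hjv; rewrite negbK => /eqP.
  have := topJ j i hjJ hiJ; rewrite (gvE j) vj mulr0 addr0 => hle.
  exact: sq_le_abs.
pose r := h - a *: v.
have rE i : r i 0 = if i \in J then e i 0 else - (a * v i 0).
  have -> : r i 0 = h i 0 - a * v i 0 by rewrite /r !mxE.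
  rewrite hh gvE; case: ifP => _; first by rewrite addrK.
  by rewrite sub0r.
have eta_b : nsq r <= 3 * D ^+ 2.
  have s1 : nsq r <= \sum_i ((if i \in J then E i else 0) +
        (if i \in P then 2 * (Gam *m w) i 0 ^+ 2 + 2 * E i else 0)).
    apply: ler_sum => i _; rewrite rE /P !inE.
    case: (boolP (i \in J)) => hiJ /=.
      by rewrite addr0.
    rewrite sqrrN add0r.
    case: (eqVneq (v i 0) 0) => [->|hvi].
      by rewrite /= mulr0 expr0n.
    rewrite /= gvE /E.
    have := sqr_ge0 (e i 0 + a * v i 0 + e i 0); nra.
  apply: le_trans s1 _.
  rewrite big_split /= -!big_mkcond /= big_split /= -!mulr_sumr.
  apply: le_trans (_ : _ <= \sum_(i in J) E i + (2 * \sum_(j in Q) E j + 2 * \sum_(i in P) E i)) _.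
    by rewrite lerD2l lerD2r ler_pM2l.
  apply: le_trans (_ : _ <= 3 * \sum_(i in F) E i) _; last first.
    by rewrite ler_pM2l.
  have eqs : forall A : {set 'I_n}, \sum_(i in A) E i = \sum_i ((i \in A)%:R * E i).
    move=> A; rewrite big_mkcond; apply: eq_bigr => i _.
    by case: (i \in A); rewrite ?mul1r ?mul0r.
  rewrite !eqs !mulr_sumr -!big_split /=; apply: ler_sum => i _.
  rewrite /F /P /Q !inE.
  case: (i \in J); case: (v i 0 != 0); case: (i \in Sw) => /=;
    rewrite ?mulr0 ?addr0 ?add0r ?mul1r ?mul0r //; have := E0 i; lra.
have hdec : h = a *: v + r by rewrite /r addrC subrK.
set eta := nsq r in eta_b.
set s := dotv v r.
have nh : nsq h = a ^+ 2 + 2 * a * s + eta.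
  by rewrite hdec nsqD nsqZ hv1 mulr1 dotvZl /s /eta; ring.
have dh : dotv v h = a + s by rewrite hdec dotvDr dotvZr dotvxx hv1 mulr1.
have cs : s ^+ 2 <= eta by have := cauchy_schwarz v r; rewrite hv1 mul1r.
have a2 : theta ^+ 2 * g <= a ^+ 2.
  by rewrite /a exprMn ler_pM2l // exprn_gt0.
have tg : 0 < theta ^+ 2 * g by rewrite mulr_gt0 // exprn_gt0.
have eta0 : 0 <= eta by exact: nsq_ge0.
have eta4 : 4 * eta <= a ^+ 2 by lra.
have nhp : a ^+ 2 / 4 <= nsq h.
  rewrite nh; have := sqr_ge0 (a + 2 * s); nra.
have a2p : 0 < a ^+ 2 by lra.
have Np : 0 < nsq h by apply: lt_le_trans nhp; rewrite divr_gt0.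
split => //.
- by move=> i hi; rewrite hh (negbTE hi).
- by rewrite cardJ geq_minl.
have -> : 1 - dotv v h ^+ 2 / nsq h = (nsq h - dotv v h ^+ 2) / nsq h.
  by field; rewrite gt_eqF.
rewrite ler_pdivrMr // nh dh.
set X := 12 * D ^+ 2 / (theta ^+ 2 * g).
have X1 : 3 * D ^+ 2 <= X * (a ^+ 2 / 4).
  have -> : X * (a ^+ 2 / 4) = 3 * D ^+ 2 * a ^+ 2 / (theta ^+ 2 * g).
    by rewrite /X; field; rewrite !gt_eqF.
  rewrite ler_pdivlMr //.
  by apply: ler_wpM2l; [rewrite mulr_ge0 // sqr_ge0 | ].
have X0 : 0 <= X by rewrite /X divr_ge0 // ?mulr_ge0 // ?sqr_ge0 // ltW.
have : X * (a ^+ 2 / 4) <= X * nsq h by rewrite ler_wpM2l.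
rewrite nh; nra.
Qed.

End Step.

Section Final.
Set Implicit Arguments. Unset Strict Implicit. Unset Printing Implicit Defensive.
Variable R : realType.

Lemma Gam_entry n m (X : 'M[R]_(n, m)) theta (v : 'cV[R]_n) i j :
  Gamma_hat X i j = W_mat X theta v i j + theta * (v i 0 * v j 0).
Proof. by rewrite /W_mat !mxE big_ord1 !mxE; ring. Qed.

Lemma Gam_mul n m (X : 'M[R]_(n, m)) theta (v u : 'cV[R]_n) :
  Gamma_hat X *m u = W_mat X theta v *m u + (theta * dotv v u) *: v.
Proof.
apply/matrixP => i j; rewrite (ord1 j) !mxE /dotv mulrAC mulr_sumr -big_split /=.
apply: eq_bigr => l _; rewrite (Gam_entry _ theta v); ring.
Qed.

Lemma subSS_entry n (A : 'M[R]_n) (S : {set 'I_n}) i j :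
  subSSm A S i j = A (enum_val i) (enum_val j).
Proof. by rewrite mxE. Qed.

Lemma Gam_sub n m (X : 'M[R]_(n, m)) theta (v : 'cV[R]_n) (S : {set 'I_n}) y :
  subSSm (Gamma_hat X) S *m y =
  subSSm (W_mat X theta v) S *m y + (theta * dotv (compv S v) y) *: compv S v.
Proof.
apply/matrixP => i j; rewrite (ord1 j) [LHS]mxE [in RHS]mxE [X in _ = _ + X]mxE.
rewrite [X in _ = X + _]mxE [X in _ = _ + _ * X]mxE /dotv mulrAC mulr_sumr -big_split /=.
apply: eq_bigr => l _; rewrite !subSS_entry [compv _ _ l 0]mxE (Gam_entry _ theta v); ring.
Qed.

Lemma Gam_sym n m (X : 'M[R]_(n, m)) : (Gamma_hat X)^T = Gamma_hat X.
Proof.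
apply/matrixP => i j; rewrite !mxE; congr (_ * _ - _).
  by apply: eq_bigr => l _; rewrite !mxE mulrC.
by rewrite eq_sym.
Qed.


Lemma sq_mono (a b : R) : 0 <= a -> a <= b -> a ^+ 2 <= b ^+ 2.
Proof. move=> h1 h2; nra. Qed.

Lemma HEc n m (X : 'M[R]_(n, m)) theta (v : 'cV[R]_n) C0 (F : {set 'I_n}) (D : R) :
  event_E X theta v C0 -> (0 < #|F|)%N ->
  C0 * (1 + theta) * Num.sqrt (#|F|%:R * ln (n%:R : R) / m%:R) <= D ->
  forall y, nsq (subSSm (W_mat X theta v) F *m y) <= D ^+ 2 * nsq y.
Proof.
move=> hE hF hD y.
have hs := le_trans (hE F hF) hD.
have h1 := spec_norm_bound (subSSm (W_mat X theta v) F) y.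
have h2 : norm2 (subSSm (W_mat X theta v) F *m y) <= D * norm2 y.
  by apply: le_trans h1 _; apply: ler_wpM2r => //; exact: norm2_ge0.
rewrite -!norm2_sq -exprMn; apply: sq_mono => //; exact: norm2_ge0.
Qed.

Lemma HEfull n (W : 'M[R]_n) (F : {set 'I_n}) (D : R) (u : 'cV[R]_n) :
  (forall y, nsq (subSSm W F *m y) <= D ^+ 2 * nsq y) ->
  (forall i, i \notin F -> u i 0 = 0) ->
  \sum_(i in F) (W *m u) i 0 ^+ 2 <= D ^+ 2 * nsq u.
Proof.
move=> hE hu; rewrite -(nsq_comp_out hu).
apply: le_trans (hE _); rewrite -sum_comp /nsq le_eqVlt; apply/orP; left; apply/eqP.
by apply: eq_bigr => j _; rewrite subSS_comp.
Qed.

Lemma card_Sk n (Gam : 'M[R]_n) k S e w0 :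
  SEP_run Gam k S e w0 -> (1 <= k)%N -> #|S k| = k.
Proof.
move=> [[js [hs1 _]] hp _] hk.
case: k hk hp => [//|[|k]] _ hp.
  by rewrite hs1 cards1.
by have [_ [hc _]] := hp k.+1 (leqnn _); rewrite hc.
Qed.

End Final.

Section Aux.
Variable R : realType.
Lemma aux_4D (D t g : R) : 0 <= D -> 0 < t -> 0 < g -> 48 * D ^+ 2 <= t ^+ 2 * g ^+ 2 ->
  4 * D <= t * g.
Proof.
move=> h0 h1 h2 h3; have h4 : 0 <= t * g by rewrite mulr_ge0 // ltW.
rewrite -(ler_pXn2r (n:=2)) //; first by rewrite exprMn; nra.
all: rewrite nnegrE //; lra.
Qed.

Lemma aux_12 (D t g : R) : 0 < t -> 0 < g -> g < 1 -> 48 * D ^+ 2 <= t ^+ 2 * g ^+ 2 ->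
  12 * D ^+ 2 <= t ^+ 2 * (g / 2).
Proof.
move=> h1 h2 h3 h4.
have : t ^+ 2 * g ^+ 2 <= t ^+ 2 * g.
  by rewrite ler_wpM2l ?sqr_ge0 // expr2 ger_pMr // ltW.
have : 0 <= t ^+ 2 * g by rewrite mulr_ge0 ?sqr_ge0 // ltW.
lra.
Qed.

Lemma aux_X (D t g : R) : 0 < t -> 0 < g -> g < 1 -> 48 * D ^+ 2 <= t ^+ 2 * g ^+ 2 ->
  12 * D ^+ 2 <= 1 / 2 * (t ^+ 2 * (g / 2)).
Proof.
move=> h1 h2 h3 h4.
have : t ^+ 2 * g ^+ 2 <= t ^+ 2 * g.
  by rewrite ler_wpM2l ?sqr_ge0 // expr2 ger_pMr // ltW.
lra.
Qed.

Lemma aux_inv (x X g : R) : g < 1 -> X <= 1 / 2 -> 1 - x <= X -> g / 2 <= x.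
Proof. move=> h1 h2 h3; lra. Qed.

Lemma aux_fin (Y g : R) : 0 <= Y -> 0 < g -> g < 1 ->
  72 * Y * g ^+ 2 <= 81 * Y * g.
Proof.
move=> h0 h1 h2.
have : Y * g ^+ 2 <= Y * g by rewrite ler_wpM2l // expr2 ger_pMr // ltW.
have : 0 <= Y * g by rewrite mulr_ge0 // ltW.
lra.
Qed.
End Aux.

Theorem theorem2 (R : realType) (C0 : R) (hC0 : 0 < C0) :
  exists C1 C2 : R, 0 < C1 /\ 0 < C2 /\
  forall (n m k k' : nat) (theta gamma : R) (v : 'cV[R]_n) (X : 'M[R]_(n, m))
         (S : nat -> {set 'I_n}) (e : nat -> 'cV[R]_n) (w0 : 'cV[R]_n)
         (w : nat -> 'cV[R]_n),
    (2 <= n)%N -> (1 <= m)%N -> 0 < theta -> (1 <= k <= n)%N ->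
    norm2 v = 1 -> (#|supp v| <= k)%N ->
    event_E X theta v C0 ->
    0 < gamma < 1 -> (k <= k')%N ->
    SEP_run (Gamma_hat X) k S e w0 ->
    Num.sqrt gamma <= restr_norm v (S k) ->
    tpower_run (Gamma_hat X) k' w0 w ->
    C1 * (1 + theta) ^+ 2 / (theta ^+ 2 * gamma ^+ 2) * k'%:R * ln (n%:R : R) <= m%:R ->
    forall T : nat, (1 <= T)%N ->
      sin_angle (w T) v <=
        C2 * (1 + theta) / (theta * gamma) * Num.sqrt (k'%:R * ln (n%:R : R) / m%:R).
Proof.
exists (144 * C0 ^+ 2), (9 * C0); split; first by rewrite mulr_gt0 // exprn_gt0.
split; first by rewrite mulr_gt0.
move=> n m k k' theta gamma v X S e w0 w hn hm hth /andP [hk1 hkn] hv hsv hE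
  /andP [hg0 hg1] hkk hsep hres [hw0 hrun] hm2 T hT.
have L0 : 0 < ln (n%:R : R) by apply: ln_gt0; rewrite ltr1n.
set L := ln (n%:R : R) in L0 hm2 hE *.
have M0 : (0 : R) < m%:R by rewrite ltr0n.
set M := (m%:R : R) in M0 hm2 hE *.
have K0 : (0 : R) < k'%:R by rewrite ltr0n; lia.
set K := (k'%:R : R) in K0 hm2 *.
set Z := C0 ^+ 2 * (1 + theta) ^+ 2 * K * L.
have th1 : 0 < 1 + theta by lra.
have Z0 : 0 < Z by rewrite /Z !mulr_gt0 // ?exprn_gt0.
set D := C0 * (1 + theta) * Num.sqrt ((3 * k')%N%:R * L / M).
have D0 : 0 <= D by rewrite /D !mulr_ge0 ?sqrtr_ge0 // ltW.
have D2 : D ^+ 2 = 3 * Z / M.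
  rewrite /D exprMn sqr_sqrtr; last by rewrite !mulr_ge0 // ?invr_ge0 ltW.
  by rewrite natrM /Z /K; field; rewrite gt_eqF.
have key : 48 * D ^+ 2 <= theta ^+ 2 * gamma ^+ 2.
  have tg : 0 < theta ^+ 2 * gamma ^+ 2 by rewrite mulr_gt0 // exprn_gt0.
  have e1 : 144 * C0 ^+ 2 * (1 + theta) ^+ 2 / (theta ^+ 2 * gamma ^+ 2) * K * L
            = 144 * Z / (theta ^+ 2 * gamma ^+ 2).
    by rewrite /Z; field; rewrite !gt_eqF.
  rewrite e1 ler_pdivrMr // in hm2.
  rewrite D2 mulrA ler_pdivrMr //; lra.
have hv1 : nsq v = 1 by exact: nsq_norm1.
have HEall (F : {set 'I_n}) : (0 < #|F|)%N -> (#|F| <= 3 * k')%N ->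
    forall y, nsq (subSSm (W_mat X theta v) F *m y) <= D ^+ 2 * nsq y.
  move=> hF hF3; apply: HEc hE hF _.
  rewrite /D; apply: ler_wpM2l; first by rewrite mulr_ge0 // ltW.
  rewrite ler_sqrt; last by rewrite !mulr_ge0 // ?invr_ge0 ltW.
  apply: ler_wpM2r; first by rewrite invr_ge0 ltW.
  by apply: ler_wpM2r; [exact: ltW | rewrite ler_nat].
have HEf (F : {set 'I_n}) (u : 'cV[R]_n) : (0 < #|F|)%N -> (#|F| <= 3 * k')%N ->
    (forall i, i \notin F -> u i 0 = 0) ->
    \sum_(i in F) (W_mat X theta v *m u) i 0 ^+ 2 <= D ^+ 2 * nsq u.
  by move=> h1 h2 h3; apply: HEfull (HEall F h1 h2) h3.
have hcard := card_Sk hsep hk1.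
have [_ _ htop] := hsep.
have hq : gamma <= nsq (compv (S k) v).
  move: hres; rewrite /restr_norm -nsq_comp ler_sqrt //; exact: nsq_ge0.
have h4D : 4 * D <= theta * gamma := @aux_4D R D theta gamma D0 hth hg0 key.
have hSk0 : (0 < #|S k|)%N by rewrite hcard.
have hSk3 : (#|S k| <= 3 * k')%N by rewrite hcard (leq_trans hkk) // leq_pmull.
have [nw0 outw0 dw0] := sep_lemma hth D0 hg0 h4D (@Gam_sub R n m X theta v (S k)) (Gam_sym X)
   (HEall (S k) hSk0 hSk3) hSk0 hq htop.
have hD12 : 12 * D ^+ 2 <= theta ^+ 2 * (gamma / 2) := @aux_12 R D theta gamma hth hg0 hg1 key.
set Xb := 12 * D ^+ 2 / (theta ^+ 2 * (gamma / 2)).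
have tg2 : 0 < theta ^+ 2 * (gamma / 2) by rewrite mulr_gt0 ?exprn_gt0 ?divr_gt0.
have Xb2 : Xb <= 1 / 2.
  rewrite /Xb ler_pdivrMr //; exact: (@aux_X R D theta gamma hth hg0 hg1 key).
have inv t : [/\ nsq (w t) = 1,
    exists Sw : {set 'I_n}, (#|Sw| <= k')%N /\ (forall i, i \notin Sw -> w t i 0 = 0),
    gamma / 2 <= dotv v (w t) ^+ 2 &
    ((1 <= t)%N -> 1 - dotv v (w t) ^+ 2 <= Xb)].
  elim: t => [|t [hn1 [Sw [hSw hout]] hdot _]].
    rewrite hw0; split => //; exists (S k); split => //; by rewrite hcard.
  have [h [[J [hJ hh]] hwt]] := hrun t.
  have [Np houtJ hJk hsin] := step_lemma hth D0 (divr_gt0 hg0 (ltr0Sn R 1)) (@Gam_mul R n m X theta v)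
    HEf hv1 hsv hkk hn1 hSw hout hdot hD12 hJ hh.
  have c2 : (norm2 h)^-1 ^+ 2 = (nsq h)^-1 by rewrite exprVn norm2_sq.
  have hd : dotv v (w t.+1) ^+ 2 = dotv v h ^+ 2 / nsq h.
    by rewrite hwt dotvZr exprMn c2 mulrC.
  split.
  - by rewrite hwt nsqZ c2 mulVf // gt_eqF.
  - exists J; split => // i hi; by rewrite hwt mxE houtJ // mulr0.
  - rewrite hd; exact: (@aux_inv R _ Xb gamma hg1 Xb2 (hsin)).
  - by rewrite hd.
have [_ _ _ hb] := inv T.
have hb' := hb hT.
rewrite /sin_angle dotvC.
set tg := 9 * C0 * (1 + theta) / (theta * gamma) * Num.sqrt (K * L / M).
have tg0 : 0 <= tg.
  rewrite /tg; apply: mulr_ge0; last exact: sqrtr_ge0.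
  by apply: divr_ge0; apply: ltW; rewrite !mulr_gt0.
rewrite -(ger0_norm tg0) -sqrtr_sqr ler_sqrt; last exact: sqr_ge0.
apply: le_trans hb' _.
have e1 : Xb = 72 * (Z / (M * theta ^+ 2)) / gamma.
  by rewrite /Xb D2; field; rewrite !gt_eqF.
have e2 : tg ^+ 2 = 81 * (Z / (M * theta ^+ 2)) / gamma ^+ 2.
  rewrite /tg exprMn sqr_sqrtr; last by rewrite !mulr_ge0 // ?invr_ge0 ltW.
  by rewrite /Z; field; rewrite !gt_eqF.
rewrite e1 e2.
have Y0 : 0 <= Z / (M * theta ^+ 2) by rewrite divr_ge0 ?mulr_ge0 ?ltW ?exprn_gt0.
set Y := Z / (M * theta ^+ 2) in Y0 *.
rewrite ler_pdivrMr // mulrAC ler_pdivlMr ?exprn_gt0 //.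
exact: aux_fin.
Qed.
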